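(* Let $g$ be any change of section. Then: (1) for all $\theta\in\mathbb{R}^d$, the matrices $\widehat\mu(\theta)$ and ${}^g\widehat\mu(\theta)$ have the same eigenvalues; in particular ${}^gk(\theta)=k(\theta)$ wherever $k$ is defined; (2) ${}^g\widehat\mu(0)=\widehat\mu(0)$, i.e. the Markovian part of the $g$-changed process has the same transition matrix as the original one; in particular ${}^g\pi=\pi$; (3) ${}^gm=m$; (4) there is no affine hyperplane $H$ of $\mathbb{R}^d$ such that $\operatorname{supp}({}^g\mu)\subset H$, where $\operatorname{supp}({}^g\mu)=\bigcup_{i,j}\operatorname{supp}({}^g\mu_{i,j})$.
   Context: Fix integers $d,p\ge 1$. Let $(Z_n)=(A_n,M_n)$ be a Markov-additive process on $\mathbb{Z}^d\times\{1,\dots,p\}$ (a Markov chain with $\mathbb{P}_{(x,i)}((A_1,M_1)=(x',i'))=\mathbb{P}_{(0,i)}((A_1,M_1)=(x'-x,i'))$), with jump matrix of sub-probability measures $\mu_{i,j}(x)=\mathbb{P}_{(0,i)}((A_1,M_1)=(x,j))$, assumed irreducible, aperiodic (for every state $(x,i)$, $\gcd\{n\ge1:\mathbb{P}_{(x,i)}(Z_n=(x,i))>0\}=1$), and with finite exponential moments ($\sum_x e^{\alpha\|x\|}\mu_{i,j}(x)<\infty$ for all $\alpha>0$). Fourier transform: $\widehat\mu(\theta)_{i,j}=\sum_x e^{\mathbf{i}x\cdot\theta}\mu_{i,j}(x)$; $\widehat\mu(0)$ is the transition matrix of $(M_n)$, with unique stationary distribution $\pi$. Local drifts $m_{i,j}=\sum_x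 x\mu_{i,j}(x)$, global drift $m=\sum_{i,j}\pi_im_{i,j}$. Near $\theta=0$, $k(\theta)$ denotes the unique eigenvalue of maximal modulus of $\widehat\mu(\theta)$ (it is simple). A change of section is a real $p\times d$ matrix $g$ with rows $g_1,\dots,g_p$; the $g$-changed process is the Markov-additive process (with additive part in a countable subset of $\mathbb{R}^d$) with jump measures ${}^g\mu_{i,j}(x)=\mu_{i,j}(x+g_j-g_i)$, $x\in\mathbb{R}^d$. All quantities of the $g$-changed process are defined in the same way and denoted with a left superscript $g$: ${}^g\widehat\mu(\theta)_{i,j}=\sum_{x\in\mathbb{R}^d}e^{\mathbf{i}x\cdot\theta}\,{}^g\mu_{i,j}(x)$, ${}^g\pi$ the stationary distribution of the matrix ${}^g\widehat\mu(0)$, ${}^gm_{i,j}=\sum_x x\,{}^g\mu_{i,j}(x)$, ${}^gm=\sum_{i,j}{}^g\pi_i\,{}^gm_{i,j}$, ${}^gk$ the leading eigenvalue of ${}^g\widehat\mu$. *)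

(* Defs.v *)
From HB Require Import structures.
From mathcomp Require Import all_boot all_order all_algebra.
From mathcomp Require Import all_classical all_reals all_analysis.
From mathcomp Require Import complex.

Set Implicit Arguments.
Unset Strict Implicit.
Unset Printing Implicit Defensive.

Import Order.TTheory GRing.Theory Num.Theory.
Import numFieldNormedType.Exports.
Local Open Scope ring_scope.

Section MAP.
Variable R : realType.
Variables d p : nat.

(* jump "measures": mu i j x = P_(0,i)((A_1,M_1) = (x,j)), x ranging over R^d
   (for the original process the support is in Z^d, assumed separately). *)
Definition jumps := 'I_p -> 'I_p -> 'rV[R]_d -> R.

Definition dotv (x y : 'rV[R]_d) : R := \sum_(k < d) x 0 k * y 0 k.

Definition intv (x : 'rV[R]_d) : Prop := forall k, x 0 k \is a Num.int.

(* Sum of a real family over an arbitrary index type (meaningful for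
   absolutely summable families): positive part minus negative part,
   each summed with MathComp-Analysis's esum. *)
Definition rsum (T : choiceType) (f : T -> R) : R :=
  (fine (\esum_(x in [set: T]) (Num.max (f x) 0)%:E)
   - fine (\esum_(x in [set: T]) (Num.max (- f x) 0)%:E))%R.

Definition change_section (g : 'M[R]_(p, d)) (mu : jumps) : jumps :=
  fun i j x => mu i j (x + row j g - row i g).

Definition fourier (mu : jumps) (theta : 'rV[R]_d) : 'M[complex R]_p :=
  \matrix_(i, j)
    Complex (rsum (fun x => cos (dotv x theta) * mu i j x))
            (rsum (fun x => sin (dotv x theta) * mu i j x)).

(* transition matrix of the Markovian part (M_n): hat mu(0), as a real matrix *)
Definition trans (mu : jumps) : 'M[R]_p := \matrix_(i, j) rsum (mu i j).

Definition stationary (P : 'M[R]_p) (pi : 'rV[R]_p) : Prop :=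
  (forall i, 0 <= pi 0 i) /\ \sum_i pi 0 i = 1 /\ pi *m P = pi.

Definition local_drift (mu : jumps) (i j : 'I_p) : 'rV[R]_d :=
  \row_k rsum (fun x : 'rV[R]_d => x 0 k * mu i j x).

Definition global_drift (mu : jumps) (pi : 'rV[R]_p) : 'rV[R]_d :=
  \sum_i \sum_j pi 0 i *: local_drift mu i j.

(* one-step and n-step accessibility for the Markov-additive chain on
   R^d x {1..p}: P_{(x,i)}(Z_1 = (y,j)) = mu_{i,j}(y - x). *)
Definition step (mu : jumps) (s t : 'rV[R]_d * 'I_p) : Prop :=
  0 < mu s.2 t.2 (t.1 - s.1).

Fixpoint reach (mu : jumps) (n : nat) (s t : 'rV[R]_d * 'I_p) : Prop :=
  match n with
  | O => s = t
  | S n => exists u, reach mu n s u /\ step mu u t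
  end.

Definition irreducible_MAP (mu : jumps) : Prop :=
  forall (x y : 'rV[R]_d) (i j : 'I_p), intv x -> intv y ->
    exists n, reach mu n (x, i) (y, j).

(* aperiodicity: for each state (x,i) of Z^d x {1..p}, the gcd of
   {n >= 1 : P_{(x,i)}(Z_n = (x,i)) > 0} is 1, i.e. no k > 1 divides all
   these return times *)
Definition aperiodic_MAP (mu : jumps) : Prop :=
  forall (x : 'rV[R]_d) (i : 'I_p), intv x ->
    forall k : nat, (1 < k)%N ->
      exists n : nat, [/\ (0 < n)%N, reach mu n (x, i) (x, i) & ~~ (k %| n)%N].

Definition exp_moments (mu : jumps) : Prop :=
  forall (i j : 'I_p) (alpha : R), 0 < alpha ->
    (\esum_(x in [set: 'rV[R]_d]) (expR (alpha * `|x|) * mu i j x)%:E < +oo)%E.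

(* lambda is the unique eigenvalue of maximal modulus of A
   (this is how k(theta) is defined, where it is defined) *)
Definition leading_eigenvalue (A : 'M[complex R]_p) (lambda : complex R) : Prop :=
  eigenvalue A lambda /\
  (forall nu, eigenvalue A nu -> nu != lambda -> `|nu| < `|lambda|).

Definition supp_in_affine_hyperplane (mu : jumps) : Prop :=
  exists (a : 'rV[R]_d) (c : R), a != 0 /\
    forall i j x, mu i j x != 0 -> dotv a x = c.

End MAP.

(* Main.v *)
Require Import Defs.
From HB Require Import structures.
From mathcomp Require Import all_boot all_order all_algebra.
From mathcomp Require Import all_classical all_reals all_analysis.
From mathcomp Require Import complex.
From mathcomp Require Import lra ring.
Import Order.TTheory GRing.Theory Num.Theory.
Import numFieldNormedType.Exports.
Local Open Scope ring_scope.
Set Implicit Arguments.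
Unset Strict Implicit.

Section RS.
Variable R : realType.
Variable T : choiceType.
Local Notation E f := (\esum_(x in [set: T]) ((f x)%:E))%E.

Lemma esumZ (r : R) (a : T -> R) : 0 <= r -> (forall x, 0 <= a x) ->
  (\esum_(x in [set: T]) (r * a x)%:E = r%:E * E a)%E.
Proof.
move=> r0 a0; rewrite /esum -ereal_supZl//; last first.
  by apply/set0P; exists 0%E; exists set0; [exact: fsets_set0| rewrite fsbig_set0].
rewrite image_comp; congr ereal_sup; apply: eq_imagel => A _ /=.
by rewrite ge0_mule_fsumr// => i; rewrite lee_fin.
Qed.

Definition fin (h : T -> R) := (forall x, 0 <= h x) /\ (E h < +oo)%E.

Lemma finE h : fin h -> (fine (E h))%:E = E h.
Proof.
case=> h0 hf; rewrite fineK// ge0_fin_numE// esum_ge0// => x _; rewrite lee_fin; exact: h0.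
Qed.

Lemma fin_le h k : (forall x, 0 <= h x <= k x) -> fin k -> fin h.
Proof.
move=> hk [k0 kf]; split; first by move=> x; case/andP: (hk x).
apply: le_lt_trans kf; apply: le_esum => x _; rewrite lee_fin; by case/andP: (hk x).
Qed.

Lemma finD h k : fin h -> fin k -> fin (fun x => h x + k x).
Proof.
move=> [h0 hf] [k0 kf]; split; first by move=> x; rewrite addr_ge0.
under eq_esum do rewrite EFinD.
rewrite esumD //; first exact: lte_add_pinfty.
  by move=> x _; rewrite lee_fin.
by move=> x _; rewrite lee_fin.
Qed.

Lemma fineDE h k : fin h -> fin k ->
  fine (E (fun x => h x + k x)) = fine (E h) + fine (E k).
Proof.
move=> fh fk; case: (fh) => h0 _; case: (fk) => k0 _.
under eq_esum do rewrite EFinD.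
rewrite esumD; last by move=> x _; rewrite lee_fin.
  by rewrite -(finE fh) -(finE fk).
by move=> x _; rewrite lee_fin.
Qed.

Lemma finZ r h : 0 <= r -> fin h -> fin (fun x => r * h x).
Proof.
move=> r0 fh; case: (fh) => h0 _; split; first by move=> x; rewrite mulr_ge0.
by rewrite esumZ// -(finE fh) -EFinM ltry.
Qed.

Lemma fineZE r h : 0 <= r -> fin h -> fine (E (fun x => r * h x)) = r * fine (E h).
Proof.
move=> r0 fh; case: (fh) => h0 _.
by rewrite esumZ// -(finE fh) -EFinM.
Qed.

Lemma fin0 : fin (fun _ => 0).
Proof. by split=> //; rewrite esum1. Qed.

Lemma fine0E : fine (E (fun _ : T => 0 : R)) = 0.
Proof. by rewrite esum1. Qed.

Definition pos (c : R) := Num.max c 0.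
Definition neg (c : R) := Num.max (- c) 0.

Lemma pnE c : pos c - neg c = c.
Proof.
rewrite /pos /neg; have [h|h] := boolP (0 <= c).
  by rewrite (max_l h) (max_r _) ?subr0 // oppr_le0.
rewrite -ltNge in h.
rewrite (max_r (ltW h)) max_l; first by rewrite sub0r opprK.
by rewrite oppr_ge0 ltW.
Qed.

Lemma pos_ge0 c : 0 <= pos c. Proof. by rewrite /pos le_max lexx orbT. Qed.
Lemma neg_ge0 c : 0 <= neg c. Proof. by rewrite /neg le_max lexx orbT. Qed.
Lemma pos_le c : pos c <= `|c|.
Proof. by rewrite /pos ge_max ler_norm normr_ge0. Qed.
Lemma neg_le c : neg c <= `|c|.
Proof. by rewrite /neg ge_max normr_ge0 -normrN ler_norm. Qed.

Lemma pos_le2 a b : 0 <= a -> 0 <= b -> pos (a - b) <= a.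
Proof. by move=> a0 b0; rewrite /pos ge_max a0 andbT gerBl. Qed.
Lemma neg_le2 a b : 0 <= a -> 0 <= b -> neg (a - b) <= b.
Proof. by move=> a0 b0; rewrite /neg ge_max b0 andbT opprB gerBl. Qed.

Lemma pnD a b : pos (a - b) + b = neg (a - b) + a.
Proof. have := pnE (a - b); lra. Qed.

Lemma rsumE f : rsum f = fine (E (fun x => pos (f x))) - fine (E (fun x => neg (f x))).
Proof. by []. Qed.

Lemma rsumB a b : fin a -> fin b -> rsum (fun x => a x - b x) = fine (E a) - fine (E b).
Proof.
move=> fa fb; case: (fa) => a0 _; case: (fb) => b0 _.
have fp : fin (fun x => pos (a x - b x)).
  by apply: fin_le fa => x; rewrite pos_ge0 pos_le2.
have fn : fin (fun x => neg (a x - b x)).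
  by apply: fin_le fb => x; rewrite neg_ge0 neg_le2.
have := fineDE fp fb; have := fineDE fn fa.
under eq_esum do rewrite -pnD.
rewrite rsumE; lra.
Qed.

Lemma fine4 r1 r2 r3 r4 h1 h2 h3 h4 : 0 <= r1 -> 0 <= r2 -> 0 <= r3 -> 0 <= r4 ->
  fin h1 -> fin h2 -> fin h3 -> fin h4 ->
  fine (E (fun x => r1 * h1 x + r2 * h2 x + (r3 * h3 x + r4 * h4 x))) =
  r1 * fine (E h1) + r2 * fine (E h2) + (r3 * fine (E h3) + r4 * fine (E h4)).
Proof.
move=> p1 p2 p3 p4 f1 f2 f3 f4.
have g1 := finZ p1 f1; have g2 := finZ p2 f2; have g3 := finZ p3 f3; have g4 := finZ p4 f4.
rewrite (fineDE (finD g1 g2) (finD g3 g4)) (fineDE g1 g2) (fineDE g3 g4).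
by rewrite (fineZE p1 f1) (fineZE p2 f2) (fineZE p3 f3) (fineZE p4 f4).
Qed.

Lemma alg4 (pa na pb nb P1 N1 P2 N2 : R) :
  pa*P1 + na*N1 + (pb*P2 + nb*N2) - (pa*N1 + na*P1 + (pb*N2 + nb*P2)) =
  (pa - na)*(P1 - N1) + (pb - nb)*(P2 - N2).
Proof. ring. Qed.

Definition summ (f : T -> R) := (E (fun x => `|f x|) < +oo)%E.

Lemma summ_fin f : summ f -> fin (fun x => `|f x|).
Proof. by move=> sf; split. Qed.

Lemma rsum_lin f g a b : summ f -> summ g ->
  rsum (fun x => a * f x + b * g x) = a * rsum f + b * rsum g.
Proof.
move=> /summ_fin sf /summ_fin sg.
have fp : fin (fun x => pos (f x)) by apply: fin_le sf => x; rewrite pos_ge0 pos_le.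
have fn : fin (fun x => neg (f x)) by apply: fin_le sf => x; rewrite neg_ge0 neg_le.
have gp : fin (fun x => pos (g x)) by apply: fin_le sg => x; rewrite pos_ge0 pos_le.
have gn : fin (fun x => neg (g x)) by apply: fin_le sg => x; rewrite neg_ge0 neg_le.
pose A x := (pos a * pos (f x) + neg a * neg (f x)) + (pos b * pos (g x) + neg b * neg (g x)).
pose B x := (pos a * neg (f x) + neg a * pos (f x)) + (pos b * neg (g x) + neg b * pos (g x)).
have eAB : (fun x => a * f x + b * g x) = (fun x => A x - B x).
  apply: funext => x; rewrite /A /B.
  rewrite -[in LHS](pnE a) -[in LHS](pnE b) -[in LHS](pnE (f x)) -[in LHS](pnE (g x)).
  set u1 := pos a; set u2 := neg a; set u3 := pos b; set u4 := neg b.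
  set v1 := pos (f x); set v2 := neg (f x); set v3 := pos (g x); set v4 := neg (g x).
  ring.
have pa := pos_ge0 a; have na := neg_ge0 a; have pb := pos_ge0 b; have nb := neg_ge0 b.
have fA : fin A by rewrite /A; apply: finD; apply: finD; apply: finZ.
have fB : fin B by rewrite /B; apply: finD; apply: finD; apply: finZ.
have EA : fine (E A) = pos a * fine (E (fun x => pos (f x))) + neg a * fine (E (fun x => neg (f x)))
   + (pos b * fine (E (fun x => pos (g x))) + neg b * fine (E (fun x => neg (g x)))).
  exact: fine4.
have EB : fine (E B) = pos a * fine (E (fun x => neg (f x))) + neg a * fine (E (fun x => pos (f x)))
   + (pos b * fine (E (fun x => neg (g x))) + neg b * fine (E (fun x => pos (g x)))).
  exact: fine4.
rewrite eAB rsumB // EA EB !rsumE alg4 !pnE.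
by [].
Qed.

Lemma rsum_ge0E f : fin f -> rsum f = fine (E f).
Proof.
move=> ff; have := rsumB ff fin0; rewrite fine0E subr0 => <-.
by congr rsum; apply: funext => x; rewrite subr0.
Qed.

End RS.

Section M1.
Variables (R : realType) (d p : nat).
Local Notation V := 'rV[R]_d.

Lemma rsum_shift (f : V -> R) w : rsum (fun x => f (x + w)) = rsum f.
Proof.
have bij : set_bij [set: V] [set: V] (fun x => x + w).
  by rewrite setTT_bijective; exists (fun x => x - w) => x; [exact: addrK | exact: subrK].
rewrite /rsum; congr (fine _ - fine _).
  by rewrite [RHS](@reindex_esum R V V setT setT _ _ bij).
by rewrite [RHS](@reindex_esum R V V setT setT _ _ bij).
Qed.

Lemma dotvBl (x y z : V) : dotv x z - dotv y z = dotv (x - y) z.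
Proof. by rewrite /dotv -sumrB; apply: eq_bigr => k _; rewrite !mxE mulrBl. Qed.

Lemma dotv0r (x : V) : dotv x 0 = 0.
Proof. by rewrite /dotv big1 // => k _; rewrite mxE mulr0. Qed.

Lemma dotv_delta (a : V) k : dotv a (delta_mx 0 k) = a 0 k.
Proof.
rewrite /dotv (bigD1 k) //= mxE !eqxx mulr1 big1 ?addr0 // => j /negbTE jk.
by rewrite mxE jk andbF mulr0.
Qed.

Lemma entry_le (x : V) k : `|x 0 k| <= `|x|.
Proof.
have -> : `|x| = mx_norm x by [].
rewrite mx_normrE. exact: (le_bigmax _ _ (0, k)).
Qed.

Lemma gshift (mu : jumps R d p) g i j (F : V -> R) :
  rsum (fun x => F x * change_section g mu i j x) =
  rsum (fun y => F (y - (row j g - row i g)) * mu i j y).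
Proof.
rewrite -[in RHS](rsum_shift _ (row j g - row i g)); congr rsum; apply: funext => x.
by rewrite addrK /change_section addrA.
Qed.

Lemma gshift1 (mu : jumps R d p) g i j :
  rsum (change_section g mu i j) = rsum (mu i j).
Proof.
rewrite -[in RHS](rsum_shift _ (row j g - row i g)); congr rsum; apply: funext => x.
by rewrite /change_section addrA.
Qed.

Lemma summ_h (mu : jumps R d p) i j (h : V -> R) : (forall x, 0 <= mu i j x) ->
  exp_moments mu -> (forall x, `|h x| <= expR (1 * `|x|)) ->
  summ (fun x => h x * mu i j x).
Proof.
move=> m0 mom hb.
have fe : fin (fun x => expR (1 * `|x|) * mu i j x).
  by split; [move=> x; rewrite mulr_ge0 ?expR_ge0 | exact: mom].
have := @fin_le _ _ (fun x => `|h x * mu i j x|) _ _ fe; case.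
  move=> x; rewrite normr_ge0 /= normrM (ger0_norm (m0 x)).
  by rewrite ler_wpM2r.
by [].
Qed.

Lemma expR_norm (x : V) : 1 <= expR (1 * `|x|).
Proof. rewrite mul1r; apply: le_trans (expR_ge1Dx _); by rewrite lerDl. Qed.

End M1.

Lemma eig_sim (F : fieldType) n (A D D' : 'M[F]_n) l :
  D' *m D = 1%:M -> D *m D' = 1%:M -> eigenvalue (D *m A *m D') l -> eigenvalue A l.
Proof.
move=> h1 h2 /eigenvalueP [v hv nz]; apply/eigenvalueP; exists (v *m D).
  have : v *m (D *m A *m D') *m D = (l *: v) *m D by rewrite hv.
  rewrite !mulmxA -[_ *m D' *m D]mulmxA h1 mulmx1 => ->.
  by rewrite scalemxAl.
apply: contra nz => /eqP h; apply/eqP. rewrite -[v]mulmx1 -h2 mulmxA h mul0mx. by apply/rowP => k; rewrite !mxE.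
Qed.

Lemma eig_sim_iff (F : fieldType) n (A D D' : 'M[F]_n) l :
  D' *m D = 1%:M -> D *m D' = 1%:M -> eigenvalue (D *m A *m D') l <-> eigenvalue A l.
Proof.
move=> h1 h2; split; first exact: eig_sim.
have eA : A = D' *m (D *m A *m D') *m D.
  by rewrite !mulmxA h1 mul1mx -mulmxA h1 mulmx1.
by rewrite {1}eA; apply: eig_sim.
Qed.

Section M2.
Variables (R : realType) (d p : nat).
Local Notation V := 'rV[R]_d.

Definition cexp (t : R) : complex R := Complex (cos t) (sin t).

Lemma cmul (a b c e : R) : (Complex a b) * (Complex c e) = Complex (a * c - b * e) (a * e + b * c).
Proof. by []. Qed.

Lemma calg (ca sa cb sb C S : R) :
  Complex ((cb * ca + sb * sa) * C + (sb * ca - cb * sa) * S) ((cb * ca + sb * sa) * S + - (sb * ca - cb * sa) * C)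
  = Complex ca sa * Complex C S * Complex cb (- sb).
Proof. by rewrite !cmul; congr Complex; ring. Qed.

Lemma alg1 (x y z u m : R) : (x * y + z * u) * m = y * (x * m) + u * (z * m).
Proof. ring. Qed.
Lemma alg2 (x y z u m : R) : (x * y - z * u) * m = y * (x * m) + (- u) * (z * m).
Proof. ring. Qed.

Lemma cexpK t : cexp (- t) * cexp t = 1.
Proof.
rewrite /cexp cmul cosN sinN; have := cos2Dsin2 t.
move: (cos t) (sin t) => c s h.
have -> : c * c - - s * s = 1 by rewrite -h; ring.
by have -> : c * s + - s * c = 0 by ring.
Qed.

Lemma fourier_entry (mu : jumps R d p) g theta i j :
  summ (fun x => cos (dotv x theta) * mu i j x) ->
  summ (fun x => sin (dotv x theta) * mu i j x) ->
  fourier (change_section g mu) theta i j =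
  cexp (dotv (row i g) theta) * fourier mu theta i j * cexp (- dotv (row j g) theta).
Proof.
move=> sc ss.
rewrite !mxE (gshift _ _ _ _ (fun x => cos (dotv x theta))) (gshift _ _ _ _ (fun x => sin (dotv x theta))).
set a := dotv (row i g) theta; set b := dotv (row j g) theta.
have hw : forall y, dotv (y - (row j g - row i g)) theta = dotv y theta - (b - a).
  by move=> y; rewrite -!dotvBl.
have E1 : rsum (fun y => cos (dotv (y - (row j g - row i g)) theta) * mu i j y) =
   cos (b - a) * rsum (fun x => cos (dotv x theta) * mu i j x) +
   sin (b - a) * rsum (fun x => sin (dotv x theta) * mu i j x).
  rewrite -rsum_lin //; congr rsum; apply: funext => y.
  by rewrite hw cosB alg1.
have E2 : rsum (fun y => sin (dotv (y - (row j g - row i g)) theta) * mu i j y) =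
   cos (b - a) * rsum (fun x => sin (dotv x theta) * mu i j x) +
   (- sin (b - a)) * rsum (fun x => cos (dotv x theta) * mu i j x).
  rewrite -rsum_lin //; congr rsum; apply: funext => y.
  by rewrite hw sinB alg2.
rewrite E1 E2 /cexp cosN sinN cosB sinB; exact: calg.
Qed.

Definition Dm (g : 'M[R]_(p, d)) theta : 'M[complex R]_p :=
  diag_mx (\row_i cexp (dotv (row i g) theta)).
Definition Dm' (g : 'M[R]_(p, d)) theta : 'M[complex R]_p :=
  diag_mx (\row_i cexp (- dotv (row i g) theta)).

Lemma DmK g theta : Dm' g theta *m Dm g theta = 1%:M.
Proof.
rewrite /Dm /Dm' mulmx_diag -diag_const_mx; congr diag_mx.
by apply/rowP => k; rewrite !mxE cexpK.
Qed.

Lemma DmK' g theta : Dm g theta *m Dm' g theta = 1%:M.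
Proof.
rewrite /Dm /Dm' mulmx_diag -diag_const_mx; congr diag_mx.
by apply/rowP => k; rewrite !mxE mulrC cexpK.
Qed.

Lemma fourier_sim (mu : jumps R d p) g theta :
  (forall i j, summ (fun x => cos (dotv x theta) * mu i j x)) ->
  (forall i j, summ (fun x => sin (dotv x theta) * mu i j x)) ->
  fourier (change_section g mu) theta = Dm g theta *m fourier mu theta *m Dm' g theta.
Proof.
move=> sc ss; apply/matrixP => i j.
by rewrite fourier_entry // mul_mx_diag mul_diag_mx !mxE.
Qed.

End M2.

Section M3.
Variables (R : realType) (d p : nat).
Local Notation V := 'rV[R]_d.

Lemma rsum_pos (f : V -> R) x : fin f -> 0 < f x -> 0 < rsum f.
Proof.
move=> ff fx; rewrite rsum_ge0E //; apply: lt_le_trans fx _.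
rewrite -lee_fin (finE ff); apply: esum_ge; exists [set x]%classic.
  by split; [exact: finite_set1 | by []].
by rewrite fsbig_set1.
Qed.

Lemma rsum_ge0 (f : V -> R) : fin f -> 0 <= rsum f.
Proof.
move=> ff; rewrite rsum_ge0E //; apply: fine_ge0; apply: esum_ge0 => x _.
by rewrite lee_fin; case: ff.
Qed.

Lemma dotvBr (a x y : V) : dotv a (x - y) = dotv a x - dotv a y.
Proof. by rewrite /dotv -sumrB; apply: eq_bigr => k _; rewrite !mxE mulrBr. Qed.

Lemma dotvDr (a x y : V) : dotv a (x + y) = dotv a x + dotv a y.
Proof. by rewrite /dotv -big_split; apply: eq_bigr => k _; rewrite !mxE mulrDr. Qed.

Lemma intv0 : intv (0 : V).
Proof. by move=> k; rewrite mxE rpred0. Qed.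

Lemma intv_delta k : intv (delta_mx 0 k : V).
Proof. by move=> m; rewrite mxE rpred_nat. Qed.

Lemma ldrift (mu : jumps R d p) (g : 'M[R]_(p, d)) i j :
  (forall k, summ (fun x : V => x 0 k * mu i j x)) -> summ (mu i j) ->
  local_drift (change_section g mu) i j =
  local_drift mu i j - rsum (mu i j) *: (row j g - row i g).
Proof.
move=> sk sm; apply/rowP => k; rewrite !mxE.
rewrite (gshift _ _ _ _ (fun x : V => x 0 k)).
rewrite (_ : (fun y : V => (y - (row j g - row i g)) 0 k * mu i j y) =
   (fun y => 1 * (y 0 k * mu i j y) + (- (g j k - g i k)) * mu i j y)).
  by rewrite rsum_lin // mul1r mulNr mulrC.
apply: funext => y; rewrite !mxE.
move: (y 0 k) (g j k) (g i k) (mu i j y) => a b c e; ring.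
Qed.

Lemma gdrift (mu : jumps R d p) (g : 'M[R]_(p, d)) (pi : 'rV[R]_p) :
  (forall i j k, summ (fun x : V => x 0 k * mu i j x)) -> (forall i j, summ (mu i j)) ->
  global_drift (change_section g mu) pi =
  global_drift mu pi - \sum_i \sum_j (pi 0 i * rsum (mu i j)) *: (row j g - row i g).
Proof.
move=> sk sm; rewrite /global_drift -sumrB; apply: eq_bigr => i _.
rewrite -sumrB; apply: eq_bigr => j _.
by rewrite ldrift // scalerBr scalerA.
Qed.

Lemma sum0 (mu : jumps R d p) (g : 'M[R]_(p, d)) (pi : 'rV[R]_p) :
  (forall i, \sum_j rsum (mu i j) = 1) -> pi *m trans mu = pi ->
  \sum_i \sum_j (pi 0 i * rsum (mu i j)) *: (row j g - row i g) = 0.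
Proof.
move=> st e.
rewrite (eq_bigr (fun i => \sum_j (pi 0 i * rsum (mu i j)) *: row j g -
   \sum_j (pi 0 i * rsum (mu i j)) *: row i g)); last first.
  by move=> i _; rewrite -sumrB; apply: eq_bigr => j _; rewrite scalerBr.
rewrite sumrB exchange_big /=.
rewrite (eq_bigr (fun j => pi 0 j *: row j g)); last first.
  move=> j _; rewrite -scaler_suml; congr (_ *: _).
  have := congr1 (fun M : 'M[R]_(1, p) => M 0 j) e; rewrite mxE => <-.
  by apply: eq_bigr => i _; rewrite mxE.
rewrite [X in _ - X](eq_bigr (fun i => pi 0 i *: row i g)); last first.
  by move=> i _; rewrite -scaler_suml -mulr_sumr st mulr1.
by rewrite subrr.
Qed.

Lemma stat_unique (P : 'M[R]_p) (hp : (0 < p)%N) :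
  (forall w : 'rV_p, (forall i, 0 <= w 0 i) -> w *m P = w -> forall k, w 0 k = 0 -> w = 0) ->
  forall pi pi', stationary P pi -> stationary P pi' -> pi = pi'.
Proof.
move=> H pi pi' [p0 [s1 e1]] [p0' [s1' e1']].
have pos : forall i, 0 < pi' 0 i.
  move=> i; rewrite lt_def p0' andbT; apply/eqP => h.
  have z := H pi' p0' e1' i h.
  move: s1'; rewrite z big1 => [/eqP|k _]; last by rewrite mxE.
  by rewrite eq_sym oner_eq0.
pose F := fun i => pi 0 i / pi' 0 i.
have [k _ kmin] := @arg_minP _ _ _ (Ordinal hp) xpredT F isT.
set t := F _ in kmin.
pose w := pi - t *: pi'.
have w0 : w = 0.
  apply: (H w _ _ k).
  - move=> i; rewrite !mxE subr_ge0 -ler_pdivlMr //; exact: kmin.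
  - by rewrite /w mulmxBl -scalemxAl e1 e1'.
  - by rewrite !mxE /t /F divfK ?subrr // (gt_eqF (pos k)).
have epi : pi = t *: pi' by apply/eqP; rewrite -subr_eq0 -/w w0.
have t1 : t = 1.
  move: s1; rewrite epi.
  rewrite (eq_bigr (fun i => t * pi' 0 i)); last by move=> i _; rewrite mxE.
  by rewrite -mulr_sumr s1' mulr1.
by rewrite epi t1 scale1r.
Qed.

Lemma irr_H (mu : jumps R d p) :
  (forall i j x, 0 <= mu i j x) -> (forall i j, fin (mu i j)) -> irreducible_MAP mu ->
  forall w : 'rV_p, (forall i, 0 <= w 0 i) -> w *m trans mu = w ->
  forall k, w 0 k = 0 -> w = 0.
Proof.
move=> m0 fm irr w w0 ew k wk; apply/rowP => i; rewrite mxE.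
have [n hr] := irr 0 0 i k intv0 intv0.
suff: forall n s t, reach mu n s t -> w 0 t.2 = 0 -> w 0 s.2 = 0 by move/(_ n _ _ hr wk).
elim => [|m IH] s t /=; first by move=> ->.
move=> [u [hsu hut]] wt; apply: (IH s u hsu).
have Ppos : 0 < rsum (mu u.2 t.2) by apply: rsum_pos hut.
have hs : \sum_i0 w 0 i0 * trans mu i0 t.2 = 0.
  by have := congr1 (fun M : 'M[R]_(1, p) => M 0 t.2) ew; rewrite mxE => ->.
have hnn : forall i0, true -> 0 <= w 0 i0 * trans mu i0 t.2.
  by move=> i0 _; rewrite mxE mulr_ge0 // rsum_ge0.
have := psumr_eq0P hnn hs (i := u.2) isT.
rewrite mxE => /eqP; rewrite mulf_eq0 (gt_eqF Ppos) orbF => /eqP //.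
Qed.

Lemma no_hyper (mu : jumps R d p) (g : 'M[R]_(p, d)) (hp : (0 < p)%N) :
  irreducible_MAP mu -> aperiodic_MAP mu ->
  ~ supp_in_affine_hyperplane (change_section g mu).
Proof.
move=> irr aper [a [c [a0 H]]].
pose h := fun i => dotv a (row i g).
have path : forall n s t, reach mu n s t -> dotv a (t.1 - s.1) = n%:R * c + h t.2 - h s.2.
  elim => [|n IH] s t /=.
    by move=> ->; rewrite subrr dotv0r mul0r add0r subrr.
  move=> [u [hsu hut]].
  have hg : change_section g mu u.2 t.2 (t.1 - u.1 - (row t.2 g - row u.2 g)) != 0.
    by rewrite /change_section -addrA subrK gt_eqF.
  have := H _ _ _ hg; rewrite !dotvBr -/(h t.2) -/(h u.2) => hc.
  have := IH _ _ hsu; rewrite dotvBr => hi.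
  rewrite -natr1 mulrDl mul1r.
  move: hc hi; set Nc := n%:R * c.
  move: (dotv a t.1) (dotv a u.1) (dotv a s.1) (h t.2) (h u.2) (h s.2) => x1 x2 x3 x4 x5 x6.
  lra.
pose i0 := Ordinal hp.
have [n [n0 hr hk]] := aper 0 i0 intv0 2 isT.
have := path _ _ _ hr; rewrite /= subrr dotv0r addrK => /esym/eqP.
rewrite mulf_eq0 pnatr_eq0 eqn0Ngt n0 /= => /eqP c0.
move/eqP: a0; apply; apply/rowP => k; rewrite mxE.
have [m hm] := irr 0 (delta_mx 0 k) i0 i0 intv0 (intv_delta k).
by have := path _ _ _ hm; rewrite /= subr0 dotv_delta c0 mulr0 add0r subrr.
Qed.

End M3.

Unset Implicit Arguments.
Set Strict Implicit.

Theorem proposition2p5 (R : realType) (d p : nat)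
  (hd : (0 < d)%N) (hp : (0 < p)%N)
  (mu : 'I_p -> 'I_p -> 'rV[R]_d -> R)
  (* mu_{i,j} is supported on Z^d and is a (sub-probability) measure *)
  (mu_int : forall i j x, mu i j x != 0 -> intv x)
  (mu_ge0 : forall i j x, 0 <= mu i j x)
  (* (Z_n) is a Markov chain: total mass out of each state is 1 *)
  (mu_stoch : forall i, \sum_j rsum (mu i j) = 1)
  (mu_irr : irreducible_MAP mu)
  (mu_aper : aperiodic_MAP mu)
  (mu_mom : exp_moments mu)
  (g : 'M[R]_(p, d)) :
  let gmu := change_section g mu in
  (* (1) *)
  ((forall (theta : 'rV[R]_d) (lambda : complex R),
      eigenvalue (fourier gmu theta) lambda <-> eigenvalue (fourier mu theta) lambda)
   /\ (forall (theta : 'rV[R]_d) (lambda : complex R),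
      leading_eigenvalue (fourier gmu theta) lambda <->
      leading_eigenvalue (fourier mu theta) lambda))
  (* (2) *)
  /\ (fourier gmu 0 = fourier mu 0
      /\ forall pi : 'rV[R]_p, stationary (trans gmu) pi <-> stationary (trans mu) pi)
  (* (3) *)
  /\ (forall pi gpi : 'rV[R]_p, stationary (trans mu) pi -> stationary (trans gmu) gpi ->
        global_drift gmu gpi = global_drift mu pi)
  (* (4) *)
  /\ ~ supp_in_affine_hyperplane gmu.
Proof.
move=> gmu; rewrite {}/gmu.
have finmu : forall i j, fin (mu i j).
  move=> i j.
  have fe : fin (fun x : 'rV[R]_d => expR (1 * `|x|) * mu i j x).
    by split; [move=> x; rewrite mulr_ge0 ?expR_ge0 | exact: mu_mom].
  apply: fin_le fe => x; rewrite mu_ge0 /=.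
  by rewrite -[X in X <= _]mul1r ler_wpM2r // expR_norm.
have summu : forall i j, summ (mu i j).
  move=> i j; rewrite /summ (eq_esum (b := fun x => (mu i j x)%:E)).
    by case: (finmu i j).
  by move=> x _; rewrite ger0_norm.
have sc : forall theta i j, summ (fun x => cos (dotv x theta) * mu i j x).
  move=> theta i j; apply: summ_h => // x.
  exact: le_trans (cos_max _) (expR_norm x).
have ss : forall theta i j, summ (fun x => sin (dotv x theta) * mu i j x).
  move=> theta i j; apply: summ_h => // x.
  exact: le_trans (sin_max _) (expR_norm x).
have sk : forall i j k, summ (fun x : 'rV[R]_d => x 0 k * mu i j x).
  move=> i j k; apply: summ_h => // x.
  apply: le_trans (entry_le x k) _; rewrite mul1r.
  by apply: le_trans (expR_ge1Dx _); rewrite lerDr.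
have heig : forall theta lambda, eigenvalue (fourier (change_section g mu) theta) lambda <->
    eigenvalue (fourier mu theta) lambda.
  move=> theta lambda; rewrite (fourier_sim g (sc theta) (ss theta)).
  by apply: eig_sim_iff; [exact: DmK | exact: DmK'].
have htr : trans (change_section g mu) = trans mu.
  by apply/matrixP => i j; rewrite !mxE gshift1.
split; [split|split; [split|split]].
- exact: heig.
- move=> theta lambda; rewrite /leading_eigenvalue; split => -[h1 h2]; split.
  + exact: (proj1 (heig theta lambda) h1).
  + move=> nu hnu; apply: h2; exact: (proj2 (heig theta nu) hnu).
  + exact: (proj2 (heig theta lambda) h1).
  + move=> nu hnu; apply: h2; exact: (proj1 (heig theta nu) hnu).
- apply/matrixP => i j.
  rewrite !mxE (gshift _ _ _ _ (fun x => cos (dotv x 0))) (gshift _ _ _ _ (fun x => sin (dotv x 0))).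
  by congr Complex; congr rsum; apply: funext => y; rewrite !dotv0r.
- by move=> pi; rewrite htr.
- move=> pi gpi hpi hgpi; rewrite htr in hgpi.
  have e := stat_unique hp (irr_H mu_ge0 finmu mu_irr) hgpi hpi.
  rewrite e gdrift // sum0 ?subr0 //.
  by case: hpi => _ [].
- exact: no_hyper.
Qed.
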